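(* Let $\pi$ be uniform on $\mathrm{PF}_n$ and $f$ uniform on $\widetilde{\mathcal F}_n$. Then the species $\mu(\pi)$ and $\mu(f)$ have the same distribution. Consequently the number of inversions $\#\{(i,j):i<j,\ g(i)>g(j)\}$ has the same distribution for $g=\pi$ and $g=f$.
   Context: A parking function of length $n$ is a sequence $(\pi_1,\dots,\pi_n)$ with $1\le\pi_i\le n$ such that $\#\{t:\pi_t\le i\}\ge i$ for all $1\le i\le n$; $\mathrm{PF}_n$ denotes the set of these. $\widetilde{\mathcal F}_n$ is the set of all functions $g:[n]\to[n+1]$. For $g\in\widetilde{\mathcal F}_n$ and $0\le i\le n$, let $\mu_i(g)$ be the number of values $v\in[n+1]$ with $\#\{t:g(t)=v\}=i$; the species of $g$ is $\mu(g)=(\mu_0(g),\mu_1(g),\dots,\mu_n(g))$. *)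

(* Defs.v *)
From HB Require Import structures.
From mathcomp Require Import all_boot all_order all_algebra.
Set Implicit Arguments. Unset Strict Implicit. Unset Printing Implicit Defensive.

(* Convention: a function g : [n] -> [n+1] is encoded as
   g : {ffun 'I_n -> 'I_n.+1}, where position t : 'I_n stands for t+1
   and value v : 'I_n.+1 stands for v+1. *)
Definition funF (n : nat) := {ffun 'I_n -> 'I_n.+1}.

(* Parking functions: 1 <= pi_t <= n, and #{t : pi_t <= i} >= i for 1 <= i <= n.
   In the 0-based encoding pi_t <= i becomes (g t < i). *)
Definition is_parking (n : nat) (g : funF n) : bool :=
  [forall t : 'I_n, (g t : nat) < n] &&
  [forall i : 'I_n.+1, (0 < i) ==> (i <= #|[set t : 'I_n | (g t : nat) < i]|)].

Definition PF (n : nat) : {set funF n} := [set g | is_parking g].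

Definition mu_i (n : nat) (g : funF n) (i : nat) : nat :=
  #|[set v : 'I_n.+1 | #|[set t : 'I_n | g t == v]| == i]|.

Definition species (n : nat) (g : funF n) : seq nat := mkseq (mu_i g) n.+1.

Definition inversions (n : nat) (g : funF n) : nat :=
  #|[set p : 'I_n * 'I_n | (p.1 < p.2) && (g p.2 < g p.1)]|.

Definition unif_prob (T : finType) (A : {set T}) (E : pred T) : rat :=
  (#|[set x in A | E x]|%:R / #|A|%:R)%R.

(* Main.v *)
Require Import Defs.
From HB Require Import structures.
From mathcomp Require Import all_boot all_order all_algebra.
From mathcomp Require Import zify.
Set Implicit Arguments. Unset Strict Implicit. Unset Printing Implicit Defensive.

Fixpoint inv_s (s : seq nat) : nat :=
  if s is x :: s' then count (fun y => y < x) s' + inv_s s' else 0.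

Fixpoint fill (m : nat) (b : seq bool) (u : seq nat) : seq nat :=
  if b is x :: b' then
    (if x then m :: fill m b' u else head 0 u :: fill m b' (behead u))
  else [::].

Fixpoint crossA (b : seq bool) : nat :=
  if b is x :: b' then (if x then 0 else count id b') + crossA b' else 0.
Fixpoint crossB (b : seq bool) : nat :=
  if b is x :: b' then (if x then count negb b' else 0) + crossB b' else 0.

Lemma size_fill m b u : size (fill m b u) = size b.
Proof. by elim: b u => [|[] b IH] u //=; rewrite IH. Qed.

Lemma count_fill m b u (p : pred nat) : size u = count negb b ->
  count p (fill m b u) = count id b * p m + count p u.
Proof.
elim: b u => [|[] b IH] u /=; first by case: u.
  move=> Hs; rewrite IH //; lia.
case: u => [|x u] //= [Hs]; rewrite IH //; lia.
Qed.

Lemma all_fill m b u (p : pred nat) : size u = count negb b ->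
  p m -> all p u -> all p (fill m b u).
Proof.
elim: b u => [|[] b IH] u //=; first by move=> Hs pm pu; rewrite pm IH.
case: u => [|x u] //= [Hs] pm /andP[px pu]; rewrite px IH //.
Qed.

Lemma fill_decomp N s :
  s = fill N (map (fun x => x == N) s) (filter (fun x => x != N) s).
Proof.
elim: s => [|x s IH] //=; case: eqP => [->|_] /=; by rewrite -IH.
Qed.

Lemma inv_fill_low m b u : size u = count negb b -> all (fun x => m < x) u ->
  inv_s (fill m b u) = inv_s u + crossA b.
Proof.
elim: b u => [|[] b IH] u /=; first by case: u.
  move=> Hs Hu; rewrite IH // count_fill // ltnn muln0 /=.
  have -> : count (fun y => y < m) u = 0.
    by apply/eqP; rewrite -leqn0 leqNgt -has_count; apply/hasPn=> x /(allP Hu) /ltnW; rewrite leqNgt.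
  lia.
case: u => [|x u] //= [Hs] /andP[Hx Hu]; rewrite IH // count_fill // Hx /=; lia.
Qed.

Lemma inv_fill_high m b u : size u = count negb b -> all (fun x => x < m) u ->
  inv_s (fill m b u) = inv_s u + crossB b.
Proof.
elim: b u => [|[] b IH] u /=; first by case: u.
  move=> Hs Hu; rewrite IH // count_fill // ltnn muln0 /=.
  have -> : count (fun y => y < m) u = size u by apply/eqP; rewrite -all_count.
  lia.
case: u => [|x u] //= [Hs] /andP[Hx Hu]; rewrite IH // count_fill //.
by rewrite ltnNge (ltnW Hx) /= muln0 add0n addnA.
Qed.

Lemma crossA_rcons b x :
  crossA (rcons b x) = crossA b + (if x then count negb b else 0).
Proof.
elim: b => [|y b IH] /=; first by case: x.
rewrite IH -cats1 count_cat /=; clear IH; case: x; case: y => /=; lia.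
Qed.

Lemma crossA_rev b : crossA (rev b) = crossB b.
Proof.
elim: b => [|x b IH] //=; rewrite rev_cons crossA_rcons IH count_rev; lia.
Qed.

Lemma inv_map_S u : inv_s (map S u) = inv_s u.
Proof. by elim: u => [|x u IH] //=; rewrite IH count_map. Qed.

Definition Rot (N : nat) (s : seq nat) : seq nat :=
  fill 0 (rev (map (fun x => x == N) s)) (map S (filter (fun x => x != N) s)).

Lemma size_filt N s :
  size (map S (filter (fun x => x != N) s)) = count negb (rev (map (fun x => x == N) s)).
Proof. by rewrite size_map size_filter count_rev count_map. Qed.

Lemma inv_Rot N s : all (fun x => x <= N) s -> inv_s (Rot N s) = inv_s s.
Proof.
move=> Hs; rewrite /Rot inv_fill_low ?size_filt //; last first.
  by apply/allP=> y /mapP[x _ ->].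
rewrite inv_map_S crossA_rev.
rewrite {3}(fill_decomp N s) inv_fill_high //.
  by rewrite size_filter count_map.
apply/allP=> x; rewrite mem_filter => /andP[xN xs].
by rewrite ltn_neqAle xN (allP Hs).
Qed.

Lemma size_Rot N s : size (Rot N s) = size s.
Proof. by rewrite /Rot size_fill size_rev size_map. Qed.

Lemma count_Rot0 N s : count (fun y => y == 0) (Rot N s) = count (fun y => y == N) s.
Proof.
rewrite /Rot count_fill ?size_filt // count_rev eqxx muln1 !count_map.
by rewrite (@eq_count _ (preim S (eq_op^~ 0)) pred0) ?count_pred0 ?addn0.
Qed.

Lemma count_RotS N s v : v < N ->
  count (fun y => y == v.+1) (Rot N s) = count (fun y => y == v) s.
Proof.
move=> vN; rewrite /Rot count_fill ?size_filt // muln0 add0n count_map.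
rewrite count_filter; apply: eq_count => x /=; rewrite eqSS.
by case: eqP => // ->; rewrite neq_ltn vN.
Qed.

Lemma all_Rot N s : all (fun x => x <= N) s -> all (fun x => x <= N) (Rot N s).
Proof.
move=> Hs; apply: all_fill; rewrite ?size_filt //.
apply/allP=> y /mapP[x]; rewrite mem_filter => /andP[xN xs] ->.
by rewrite ltn_neqAle xN (allP Hs).
Qed.

Lemma fill_proj m b u : size u = count negb b -> all (fun x => x != m) u ->
  map (fun x => x == m) (fill m b u) = b /\ filter (fun x => x != m) (fill m b u) = u.
Proof.
elim: b u => [|[] b IH] u /=; first by case: u.
  by move=> Hs Hu; rewrite eqxx /=; case: (IH u Hs Hu) => -> ->.
case: u => [|x u] //= [Hs] /andP[Hx Hu]; rewrite Hx (negbTE Hx) add0n in Hs *.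
by case: (IH u Hs Hu) => -> ->.
Qed.

Lemma Rot_inj N s s' : Rot N s = Rot N s' -> s = s'.
Proof.
move=> E.
have H : forall s, all (fun x => x != 0) (map S (filter (fun x => x != N) s)).
  by move=> t; apply/allP=> y /mapP[x _ ->].
case: (fill_proj (size_filt N s) (H s)) => E1 E2.
case: (fill_proj (size_filt N s') (H s')) => E1' E2'.
rewrite /Rot in E; rewrite E in E1 E2.
rewrite (fill_decomp N s) (fill_decomp N s').
congr fill.
  by rewrite -[LHS]revK -E1 E1' revK.
apply: (inj_map succn_inj); exact: (etrans (esym E2) E2').
Qed.

Lemma count_sum (s : seq nat) (a : pred nat) :
  count a s = \sum_(i < size s) a (nth 0 s i).
Proof.
elim: s => [|x s IH] /=; first by rewrite big_ord0.
by rewrite big_ord_recl /= IH.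
Qed.

Lemma inv_s_sum s : inv_s s =
  \sum_(i < size s) \sum_(j < size s) ((i < j) && (nth 0 s j < nth 0 s i)).
Proof.
elim: s => [|x s IH] /=; first by rewrite big_ord0.
rewrite big_ord_recl /= big_ord_recl /= add0n count_sum IH; congr (_ + _).
apply: eq_bigr => i _; rewrite big_ord_recl /= add0n.
by apply: eq_bigr => j _.
Qed.

Lemma card_sum (T : finType) (P : pred T) :
  #|[set t | P t]| = \sum_t (P t : nat).
Proof. by rewrite -sum1dep_card big_mkcond /=; apply: eq_bigr => t _; case: (P t). Qed.

Section Funs.
Variable n : nat.

Definition w (g : funF n) : seq nat := [seq val (g t) | t <- enum 'I_n].

Lemma size_w g : size (w g) = n.
Proof. by rewrite size_map size_enum_ord. Qed.

Lemma nth_w g (t : 'I_n) : nth 0 (w g) t = g t.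
Proof. by rewrite /w (nth_map t) ?size_enum_ord // nth_ord_enum. Qed.

Lemma all_w g : all (fun x => x <= n) (w g).
Proof. by apply/allP=> x /mapP[t _ ->]; rewrite -ltnS; exact: ltn_ord. Qed.

Lemma w_inj : injective w.
Proof.
move=> g g' E; apply/ffunP=> t; apply: val_inj.
move: (nth_w g t) (nth_w g' t); rewrite E => ->; exact.
Qed.

Lemma count_w g (p : pred nat) : count p (w g) = #|[set t | p (g t)]|.
Proof.
rewrite count_sum card_sum size_w.
by rewrite -(big_mkord predT (fun i => (p (nth 0 (w g) i) : nat))) (big_mkord predT) ; apply: eq_bigr => t _; rewrite nth_w.
Qed.

Lemma inv_w g : inversions g = inv_s (w g).
Proof.
rewrite /inversions card_sum inv_s_sum size_w.
rewrite -(pair_bigA _ (fun i j : 'I_n => ((i < j) && (g j < g i) : nat))) /=.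
by apply: eq_bigr => i _; apply: eq_bigr => j _; rewrite !nth_w.
Qed.

End Funs.
Import GRing.Theory.

Section Main.
Variable n : nat.

Definition cnt (g : funF n) (v : 'I_n.+1) := #|[set t | g t == v]|.

Lemma cnt_w g v : cnt g v = count (fun y => y == val v) (w g).
Proof. by rewrite count_w. Qed.

Definition Fm (g : funF n) : funF n := [ffun t : 'I_n => inord (nth 0 (Rot n (w g)) t)].

Lemma w_Fm g : w (Fm g) = Rot n (w g).
Proof.
apply: (@eq_from_nth _ 0); first by rewrite size_Rot !size_w.
rewrite size_w => i lin.
have -> : i = Ordinal lin by [].
rewrite nth_w ffunE inordK // ltnS.
apply: (allP (all_Rot (all_w g))); apply: mem_nth; by rewrite size_Rot size_w.
Qed.

Lemma Fm_inj : injective Fm.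
Proof. by move=> g g' E; apply: w_inj; apply: (@Rot_inj n); rewrite -!w_Fm E. Qed.

Lemma inv_Fm g : inversions (Fm g) = inversions g.
Proof. by rewrite !inv_w w_Fm inv_Rot // all_w. Qed.

Lemma ord_top (v : 'I_n.+1) : ~~ (val v < n) -> val v = n.
Proof. move: (ltn_ord v); rewrite /= -leqNgt; lia. Qed.

Lemma val_addZp1 (v : 'I_n.+1) : val (v + Zp1)%R = if val v < n then v.+1 else 0.
Proof.
rewrite /= modnDmr; case: ifP => H; first by rewrite addn1 modn_small.
rewrite (ord_top (negbT H)).
by rewrite addn1 modnn.
Qed.

Lemma cnt_Fm g v : cnt (Fm g) (v + Zp1)%R = cnt g v.
Proof.
rewrite !cnt_w w_Fm val_addZp1; case: ifP => H; first exact: count_RotS.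
rewrite (ord_top (negbT H)).
exact: count_Rot0.
Qed.

Definition Fk (k : nat) g := iter k Fm g.

Lemma Fk_inj k : injective (Fk k).
Proof. elim: k => [|k IH] g g' //= E; apply: IH; exact: Fm_inj. Qed.

Lemma inv_Fk k g : inversions (Fk k g) = inversions g.
Proof. by elim: k => [|k IH] //=; rewrite inv_Fm. Qed.

Lemma cnt_Fk k g v : cnt (Fk k g) (v + Zp1 *+ k)%R = cnt g v.
Proof.
elim: k => [|k IH] /=; first by rewrite GRing.mulr0n GRing.addr0.
by rewrite GRing.mulrSr GRing.addrA cnt_Fm.
Qed.

Lemma Zp1_mulrn (a : 'I_n.+1) : (Zp1 *+ a)%R = a.
Proof.
apply: val_inj; rewrite Zp_mulrn /= modnMml mul1n modn_small //.
Qed.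

Lemma card_pred_cnt (g : funF n) (p : pred 'I_n.+1) :
  #|[set t | p (g t)]| = \sum_(v | p v) cnt g v.
Proof.
rewrite card_sum.
transitivity (\sum_t \sum_(v | p v) ((g t == v) : nat)).
  apply: eq_bigr => t _; rewrite big_mkcond (bigD1 (g t)) //= eqxx big1 ?addn0.
    by case: (p (g t)).
  by move=> v /negbTE; rewrite eq_sym => ->; case: (p v).
rewrite exchange_big; apply: eq_bigr => v _; by rewrite /cnt card_sum.
Qed.

Lemma forall_card (q : pred 'I_n) : [forall t, q t] = (#|[set t | ~~ q t]| == 0).
Proof.
rewrite cards_eq0; apply/forallP/eqP => [H|H t].
  by apply/setP=> t; rewrite !inE H.
by apply/negPn/negP => Ht; move: (in_set0 t); rewrite -H inE Ht.
Qed.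

Lemma parking_cnt (g g' : funF n) : (forall v, cnt g v = cnt g' v) -> is_parking g = is_parking g'.
Proof.
move=> E; rewrite /is_parking !forall_card.
rewrite (card_pred_cnt g (fun v : 'I_n.+1 => ~~ (v < n))).
rewrite (card_pred_cnt g' (fun v : 'I_n.+1 => ~~ (v < n))).
rewrite (eq_bigr _ (fun v _ => E v)); congr andb.
apply: eq_forallb => i.
rewrite (card_pred_cnt g (fun v : 'I_n.+1 => v < i)).
rewrite (card_pred_cnt g' (fun v : 'I_n.+1 => v < i)).
by rewrite (eq_bigr _ (fun v _ => E v)).
Qed.

Lemma species_shift (g h : funF n) (a : 'I_n.+1) : (forall v, cnt h (v + a)%R = cnt g v) ->
  species h = species g.
Proof.
move=> E; apply: eq_mkseq => i; rewrite /mu_i !card_sum.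
rewrite (reindex_inj (addIr a)) /=.
by apply: eq_bigr => v _; move: (E v); rewrite /cnt => ->.
Qed.

Definition sub (f : funF n) (a : 'I_n.+1) : funF n := [ffun t => (f t - a)%R].

Lemma cnt_sub f a v : cnt (sub f a) v = cnt f (v + a)%R.
Proof.
by apply: eq_card => t; rewrite !inE ffunE subr_eq.
Qed.

Lemma val_sub (x a : 'I_n.+1) :
  val (x - a)%R = if a <= x then x - a else x + n.+1 - a.
Proof.
rewrite /= modnDmr; case: leqP => H.
  have -> : x + (n.+1 - a) = (x - a) + n.+1 by move: (ltn_ord a); lia.
  rewrite modnDr modn_small //; move: (ltn_ord x); lia.
rewrite modn_small; move: (ltn_ord a) (ltn_ord x); lia.
Qed.


Lemma sum1_ord m : \sum_(t < m) 1 = m.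
Proof. by elim: m => [|m IH]; rewrite ?big_ord0 // big_ord_recr /= IH addn1. Qed.

Lemma park_k (g : funF n) k : is_parking g -> 0 < k <= n ->
  k <= #|[set t | (g t : nat) < k]|.
Proof.
case/andP => _ /forallP H /andP[k0 kn]; have := H (inord k).
by rewrite inordK ?ltnS // k0.
Qed.

Lemma sub_unique_lt f (a b : 'I_n.+1) : a < b ->
  is_parking (sub f a) -> is_parking (sub f b) -> False.
Proof.
move=> ab Ha Hb.
have bn : b <= n by rewrite -ltnS.
have H1 := park_k Ha (k := b - a).
have H2 := park_k Hb (k := n.+1 - (b - a)).
have : #|[set t | (sub f a t : nat) < b - a]| +
       #|[set t | (sub f b t : nat) < n.+1 - (b - a)]| <= n.
  rewrite !card_sum -big_split /=.
  apply: (@leq_trans (\sum_(t < n) 1)); last by rewrite sum1_ord.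
  apply: leq_sum => t _; rewrite !ffunE !val_sub.
  move: (ltn_ord (f t)) (ltn_ord a) (ltn_ord b) ab.
  case: (leqP a (f t)) => h1; case: (leqP b (f t)) => h2;
  case: ltnP => h3; case: ltnP => h4 /=; lia.
have := H1 _; have := H2 _; lia.
Qed.

Lemma sub_unique f (a b : 'I_n.+1) :
  is_parking (sub f a) -> is_parking (sub f b) -> a = b.
Proof.
move=> Ha Hb; case: (ltngtP a b) => [ab|ba|/val_inj //].
  by case: (sub_unique_lt ab Ha Hb).
by case: (sub_unique_lt ba Hb Ha).
Qed.

Lemma lexM x y a b N : x * N + a <= y * N + b -> a < N -> b < N -> x <= y.
Proof.
move=> H aN bN; rewrite leqNgt; apply/negP => xy.
have : y.+1 * N <= x * N by rewrite leq_mul2r xy orbT.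
rewrite mulSn; lia.
Qed.

Lemma lexM_strict x y a b N : x * N + a <= y * N + b -> a < N -> b < N -> b < a -> x < y.
Proof.
move=> H aN bN ba; rewrite ltnNge; apply/negP => xy.
have : y * N <= x * N by rewrite leq_mul2r xy orbT.
lia.
Qed.

Lemma sub_exists f : exists a, is_parking (sub f a).
Proof.
pose C x := #|[set t | (f t : nat) < x]|.
have Cn : forall x, C x <= n.
  move=> x; rewrite /C card_sum; apply: (@leq_trans (\sum_(t < n) 1)); last by rewrite sum1_ord.
  by apply: leq_sum => t _; case: (_ < _).
have C0 : C 0 = 0 by rewrite /C card_sum big1.
have Cn1 : C n.+1 = n.
  rewrite /C card_sum -[RHS](sum1_ord n); by apply: eq_bigr => t _; rewrite ltn_ord.
pose T x := C x + n.+1 - x.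
pose M (a : 'I_n.+1) := T a * n.+2 + a.
case: (@arg_minnP _ ord0 predT M isT) => a _ Hmin.
have an : a <= n by rewrite -ltnS.
have H2 : forall i, 0 < i <= n -> i <= #|[set t | (sub f a t : nat) < i]|.
  move=> i /andP[i0 iN].
  set X := #|[set t | (sub f a t : nat) < i]|.
  case: (leqP (a + i) n.+1) => Hai.
    have EC : C (a + i) = C a + X.
      rewrite /C /X !card_sum -big_split /=; apply: eq_bigr => t _.
      rewrite ffunE val_sub; move: (ltn_ord (f t)).
      case: (leqP a (f t)) => h1; case: ltnP => h3; case: ltnP => h4 /=; lia.
    have Tle : T a <= T (a + i).
      case: (leqP (a + i) n) => Hai'.
        have := Hmin (inord (a + i)) isT; rewrite /M inordK ?ltnS // => H.
        apply: (lexM H); lia.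
      have := Hmin ord0 isT; rewrite /M /= => H.
      have Ta : T a < T 0 by apply: (lexM_strict H); lia.
      have -> : a + i = n.+1 by lia.
      move: Ta (Cn a); rewrite /T Cn1 C0; lia.
    move: Tle (Cn a) (Cn (a + i)); rewrite /T EC; lia.
  pose j := a + i - n.+1.
  have EC : X + C a = n + C j.
    have -> : n + C j = \sum_t (1 + (((f t : nat) < j) : nat)).
      by rewrite big_split sum1_ord /C card_sum.
    rewrite /C /X !card_sum -big_split /=.
    apply: eq_bigr => t _.
    rewrite ffunE val_sub; move: (ltn_ord (f t)).
    case: (leqP a (f t)) => h1; case: ltnP => h3; case: ltnP => h4 /=; rewrite /j in h4 *; lia.
  have jn : j < n.+1 by rewrite /j; lia.
  have := Hmin (inord j) isT; rewrite /M inordK // => H.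
  have Ta : T a < T j.
    apply: (lexM_strict H) => //; rewrite /j; lia.
  move: Ta (Cn a) (Cn j) EC; rewrite /T /j; lia.
exists a; rewrite /is_parking; apply/andP; split.
  apply/forallP => t.
  have n0 : 0 < n by apply: leq_ltn_trans (ltn_ord t).
  have Hc := H2 n; rewrite n0 leqnn in Hc.
  have : [set t | (sub f a t : nat) < n] = setT.
    by apply/eqP; rewrite eqEcard subsetT cardsT card_ord Hc.
  by move/setP/(_ t); rewrite !inE.
apply/forallP => i; apply/implyP => i0.
by apply: H2; rewrite i0 -ltnS ltn_ord.
Qed.


Lemma uniq_card f : #|[set a | is_parking (sub f a)]| = 1.
Proof.
case: (sub_exists f) => a Ha.
have -> : [set a | is_parking (sub f a)] = [set a].
  apply/setP => b; rewrite !inE; apply/idP/eqP => [Hb|->//].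
  exact: (sub_unique Hb Ha).
exact: cards1.
Qed.

Lemma count_decomp (P : pred (funF n)) : #|[set f | P f]| =
  \sum_(a : 'I_n.+1) #|[set f | is_parking (sub f a) && P f]|.
Proof.
rewrite card_sum; under [RHS]eq_bigr do rewrite card_sum.
rewrite exchange_big; apply: eq_bigr => f _.
case: (P f).
  under eq_bigr do rewrite andbT.
  by rewrite -card_sum uniq_card.
by rewrite big1 // => a _; rewrite andbF.
Qed.

Lemma cnt_sub_Fk g (a : 'I_n.+1) v : cnt (sub (Fk a g) a) v = cnt g v.
Proof. by rewrite cnt_sub -{2}(Zp1_mulrn a) cnt_Fk. Qed.

Lemma bij_count (P : pred (funF n)) (a : 'I_n.+1) : (forall g, P (Fk a g) = P g) ->
  #|[set f | is_parking (sub f a) && P f]| = #|[set g | is_parking g && P g]|.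
Proof.
move=> HP.
rewrite -(card_preimset _ (@Fk_inj a)); apply: eq_card => g; rewrite !inE HP.
by rewrite (parking_cnt (cnt_sub_Fk g a)).
Qed.

Lemma key (P : pred (funF n)) : (forall k g, P (Fk k g) = P g) ->
  #|[set f | P f]| = n.+1 * #|[set g | is_parking g && P g]|.
Proof.
move=> HP; rewrite count_decomp.
under eq_bigr do rewrite bij_count //.
by rewrite sum_nat_const card_ord.
Qed.

Lemma species_Fk k g : species (Fk k g) = species g.
Proof.
apply: (@species_shift g (Fk k g) (Zp1 *+ k)%R) => v; exact: cnt_Fk.
Qed.

End Main.

Theorem mainTheorem16 (n : nat) :
  (forall m : seq nat,
     unif_prob (PF n) (fun g => species g == m) =
     unif_prob [set: funF n] (fun g => species g == m)) /\
  (forall k : nat,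
     unif_prob (PF n) (fun g => inversions g == k) =
     unif_prob [set: funF n] (fun g => inversions g == k)).
Proof.
have gen : forall P : pred (funF n), (forall k g, P (Fk k g) = P g) ->
    unif_prob (PF n) P = unif_prob [set: funF n] P.
  move=> P HP; rewrite /unif_prob.
  have E1 : #|[set x in [set: funF n] | P x]| = n.+1 * #|[set x in PF n | P x]|.
    have -> : [set x in [set: funF n] | P x] = [set f | P f] by apply/setP => g; rewrite !inE.
    rewrite (key HP); congr (_ * _); apply: eq_card => g; by rewrite !inE.
  have E2 : #|[set: funF n]| = n.+1 * #|PF n|.
    have E := @key n predT (fun _ _ => erefl).
    have -> : [set: funF n] = [set f : funF n | predT f] by apply/setP => g; rewrite !inE.
    rewrite E; congr (_ * _); apply: eq_card => g; by rewrite !inE andbT.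
  rewrite E1 E2 !natrM -mulf_div divff ?mul1r //.
  by rewrite Num.Theory.pnatr_eq0.
split=> [m|k]; apply: gen => j g /=.
  by rewrite species_Fk.
by rewrite inv_Fk.
Qed.
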